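(* Let $n=2$ and consider the infinite-horizon LTI primary problem in the context with scalar input, whose optimal closed-loop matrix $M+N\Theta$ is over-damped. Let $\lambda_1$ be a real eigenvalue of $M+N\Theta$ with right eigenvector $V_1$, and let the closed loop be initialised at this single real mode ($x(t_0)=V_1$, $x(t)=V_1e^{\lambda_1t}$). If every eigenvalue $\bar\lambda$ of $\lambda_1I+M$ satisfies $\mathrm{Re}(\bar\lambda)<0$, then the hard-constrained IOC problem (with $c_3=E$ known) does not converge to the true weights.
   Context: Primary LTI problem: minimize $\int_{t_0}^{\infty}(x^TDx+u^TEu)\,dt$ subject to $\dot x=Mx+Nu$, $x(t_0)=x_0$, $x\in\mathbb{R}^n$, scalar $u$, $D$ diagonal nonnegative (unknown), $E>0$ known. The optimal control is $u=\Theta x$, $\Theta=-E^{-1}N^T\Pi$, with $\Pi$ the stabilizing solution of $M^T\Pi+\Pi M+D-\Pi NE^{-1}N^T\Pi=0$. The cost is $c^T\phi$ with $\phi=(x_1^2,\dots,x_n^2,u^2)^T$, $c=(D_{11},\dots,D_{nn},E)^T$. Hard-constrained IOC method: with $\nabla_x\phi(t)=\begin{bmatrix}2\,\mathrm{diag}(x(t))\\0_{1\times n}\end{bmatrix}$ and $\nabla_u\phi(t)=(0,\dots,0,2u(t))^T$ along the measured trajectories, let $L(t)=\int_t^{\infty}e^{-M^T(t-\tau)}\nabla_x\phi^T(\tau)\,d\tau$ (so that the costate is $p=Lc$), $W_1(t)=\nabla_u\phi^T(t)+N^TL(t)$, $W=\int_{t_0}^{\infty}W_1^T(t)W_1(t)\,dt$;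 the IOC problem is to minimize $c^TWc$ over $c$ with the known component fixed. *)

(* Defs.v *)
From HB Require Import structures.
From mathcomp Require Import all_boot all_order all_algebra.
From mathcomp Require Import all_classical all_reals all_analysis.
From mathcomp Require Import complex.
Set Implicit Arguments. Unset Strict Implicit. Unset Printing Implicit Defensive.
Import Order.TTheory GRing.Theory Num.Theory.
Import numFieldNormedType.Exports.
Local Open Scope ring_scope.
Local Open Scope classical_set_scope.

Section IOCDefs.
Variable R : realType.

Definition expmx (n : nat) (A : 'M[R]_n) : 'M[R]_n :=
  \matrix_(i, j) limn (series (fun k : nat => ((A ^+ k) i j / k`!%:R : R)) : R^nat).

(* complex eigenvalues of a real square matrix: eigenvalues (mxalgebra) of
   its embedding into R[i] *)
Definition cplx_mx (n : nat) (A : 'M[R]_n) : 'M[R[i]]_n :=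
  map_mx (fun r : R => (r%:C)%C) A.

Definition hurwitz (n : nat) (A : 'M[R]_n) : Prop :=
  forall z : R[i], eigenvalue (cplx_mx A) z -> complex.Re z < 0.

(* over-damped (second-order) closed loop: all eigenvalues real and distinct,
   i.e. two distinct real eigenvalues for n = 2 *)
Definition overdamped (A : 'M[R]_2) : Prop :=
  exists l1 l2 : R, l1 != l2 /\ eigenvalue A l1 /\ eigenvalue A l2.

(* feature gradients, phi = (x_1^2, ..., x_n^2, u^2) *)
(* transpose of  nabla_x phi = [2 diag(x); 0_{1 x n}]  : an n x (n+1) matrix *)
Definition gradx_phiT (n : nat) (x : 'cV[R]_n) : 'M[R]_(n, n.+1) :=
  \matrix_(i < n, j < n.+1) (if (j : nat) == (i : nat) then 2 * x i 0 else 0).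

(* transpose of nabla_u phi = (0, ..., 0, 2u)^T : a 1 x (n+1) row *)
Definition gradu_phiT (n : nat) (u : R) : 'rV[R]_(n.+1) :=
  \row_(j < n.+1) (if j == ord_max then 2 * u else 0).

Definition int_from (a : R) (f : R -> R) : R :=
  Rintegral lebesgue_measure `[a, +oo[ f.

Definition Lmat (n : nat) (M : 'M[R]_n) (x : R -> 'cV[R]_n) (t : R)
  : 'M[R]_(n, n.+1) :=
  \matrix_(i, j) int_from t
     (fun tau => (expmx (- ((t - tau) *: M^T)) *m gradx_phiT (x tau)) i j).

Definition W1 (n : nat) (M : 'M[R]_n) (N : 'cV[R]_n) (x : R -> 'cV[R]_n)
  (u : R -> R) (t : R) : 'rV[R]_(n.+1) :=
  gradu_phiT n (u t) + N^T *m Lmat M x t.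

Definition Wmat (n : nat) (M : 'M[R]_n) (N : 'cV[R]_n) (x : R -> 'cV[R]_n)
  (u : R -> R) (t0 : R) : 'M[R]_(n.+1) :=
  \matrix_(i, j) int_from t0
     (fun t => ((W1 M N x u t)^T *m W1 M N x u t) i j).

Definition ioc_cost (m : nat) (W : 'M[R]_m) (c : 'cV[R]_m) : R :=
  (c^T *m W *m c) 0 0.

Definition true_weights (n : nat) (D : 'M[R]_n) (E : R) : 'cV[R]_(n.+1) :=
  \col_(j < n.+1) (if unlift ord_max j is Some i then D i i else E).

Definition ioc_minimizer (n : nat) (W : 'M[R]_(n.+1)) (E : R)
  (c : 'cV[R]_(n.+1)) : Prop :=
  c ord_max 0 = E /\
  forall c' : 'cV[R]_(n.+1), c' ord_max 0 = E -> ioc_cost W c <= ioc_cost W c'.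

End IOCDefs.

(* Main.v *)
Require Import Defs.
From HB Require Import structures.
From mathcomp Require Import all_boot all_order all_algebra.
From mathcomp Require Import all_classical all_reals all_analysis.
From mathcomp Require Import complex.
From mathcomp Require Import measurable_realfun measurable_fun_approximation.
From mathcomp Require Import ring lra.
Import Order.TTheory GRing.Theory Num.Theory.
Import numFieldNormedType.Exports.
Local Open Scope ring_scope.
Local Open Scope classical_set_scope.
Section S.
Variable R : realType.

Lemma mshift (t : R) : measurable_fun setT (fun x : R => x + t).
Proof. apply: continuous_measurable_fun. move=> x. apply: continuousD => //. exact: cvg_cst. Qed.

Lemma shift_meas (t : R) A : measurable A ->
  lebesgue_measure ((fun x : R => x + t) @^-1` A) = lebesgue_measure A.
Proof.
move=> mA.
unshelve epose proof (@lebesgue_measure_unique R (pushforward (T1:=measurableTypeR R) (T2 := measurableTypeR R) lebesgue_measure (fun x : R => x + t)) _) as H.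
- exact: mshift.
- move=> X /ocitvP[->|[[a b]/= ab ->]].
    by rewrite !measure0.
  unfold pushforward.
  have -> : (fun x : R => x + t) @^-1` `]a, b] = `]a - t, b - t].
    apply/seteqP; split => x /=; rewrite !in_itv /=.
      by rewrite ltrBlDr lerBrDr.
    by rewrite ltrBlDr lerBrDr.
  rewrite !lebesgue_measure_itv /= !lte_fin ltrD2r ab.
  rewrite -!EFinD; congr (_%:E); lra.
- by rewrite (H A mA).
Qed.

Local Open Scope ereal_scope.
Lemma fineL1 (c : R) (P N : \bar R) : (0 <= c)%R -> 0 <= P -> 0 <= N ->
  fine (c%:E * P - c%:E * N) = (c * fine (P - N))%R.
Proof.
move=> c0 P0 N0.
have [->|cpos] := eqVneq c 0%R.
  by rewrite !mul0e mul0r /= subr0.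
have cgt : (0 < c)%R by rewrite lt0r cpos.
move: P N P0 N0 => [p| |] [n| |] // _ _ /=.
- by rewrite mulrBr.
all: rewrite gt0_muley ?lte_fin //=; rewrite ?mulr0 //.
Qed.
Lemma fineL2 (P N : \bar R) : 0 <= P -> 0 <= N ->
  fine (N - P) = (- fine (P - N))%R.
Proof.
move: P N => [p| |] [n| |] // _ _ /=; rewrite ?oppr0 //.
by rewrite opprB.
Qed.

Lemma shift_int_ge0 (t a : R) (f : R -> \bar R) : measurable_fun setT f ->
  (forall x, 0 <= f x) ->
  \int[lebesgue_measure]_(x in `[(a + t)%R, +oo[) f x =
  \int[lebesgue_measure]_(x in `[a, +oo[) f (x + t)%R.
Proof.
move=> mf f0.
have -> : `[a, +oo[ = (fun x => x + t)%R @^-1` `[(a + t)%R, +oo[ :> set R.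
  by apply/seteqP; split => x /=; rewrite !in_itv /= !andbT lerD2r.
have mshift' : measurable_fun (T:=measurableTypeR R) (U:=measurableTypeR R) setT (fun x : R => x + t)%R.
  exact: mshift.
rewrite -(ge0_integral_pushforward mshift' (@lebesgue_measure R)) //.
- unshelve eapply (@eq_measure_integral _ (measurableTypeR R) R _ (pushforward (T1:=measurableTypeR R) (T2:=measurableTypeR R) lebesgue_measure (fun x => x + t)%R) lebesgue_measure).
  + exact: mshift'.
  + move=> A mA _. unfold pushforward. exact: (esym (@shift_meas t A mA)).
- exact: (measurable_funTS mf).
Qed.

Lemma shift_Rint (t a : R) (f : R -> R) : measurable_fun setT f ->
  int_from (a + t)%R f = int_from a (fun x => f (x + t)%R).
Proof.
move=> mf; rewrite /int_from /Rintegral integralE [in RHS]integralE.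
have mfe : measurable_fun setT (EFin \o f) by apply/measurable_EFinP.
congr (fine (_ - _)).
  rewrite shift_int_ge0.
  - by apply: eq_integral => x _; rewrite !funeposE.
  - exact: measurable_funepos.
  - by move=> x; rewrite funeposE le_max lexx orbT.
rewrite shift_int_ge0.
- by apply: eq_integral => x _; rewrite !funenegE.
- exact: measurable_funeneg.
- by move=> x; rewrite funenegE le_max lexx orbT.
Qed.

Lemma posM (k y : R) : (0 <= k)%R -> maxe (k * y)%:E 0 = k%:E * maxe y%:E 0.
Proof.
move=> k0; have [y0|y0] := leP 0%R y.
  by rewrite !max_l ?lee_fin ?mulr_ge0.
have h1 : ((k * y)%:E <= 0)%E by rewrite lee_fin; exact: mulr_ge0_le0 k0 (ltW y0).
have h2 : (y%:E <= 0)%E by rewrite lee_fin; exact: ltW.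
by rewrite (max_r h1) (max_r h2) mule0.
Qed.
Lemma negM (k y : R) : (0 <= k)%R -> maxe (- (k * y)%:E) 0 = k%:E * maxe (- y%:E) 0.
Proof. by move=> k0; rewrite -!EFinN -mulrN posM. Qed.
Lemma posMN (k y : R) : (k < 0)%R -> maxe (k * y)%:E 0 = (- k)%:E * maxe (- y%:E) 0.
Proof. by move=> k0; rewrite -EFinN -posM ?oppr_ge0 ?ltW // mulrNN. Qed.
Lemma negMN (k y : R) : (k < 0)%R -> maxe (- (k * y)%:E) 0 = (- k)%:E * maxe (y%:E) 0.
Proof. by move=> k0; rewrite -EFinN -posM ?oppr_ge0 ?ltW // mulNr. Qed.
Lemma RintZ (D : set R) (f : R -> R) (k : R) : measurable D -> measurable_fun D f ->
  Rintegral lebesgue_measure D (fun x => k * f x)%R =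
  (k * Rintegral lebesgue_measure D f)%R.
Proof.
move=> mD mf; rewrite /Rintegral integralE [in RHS]integralE.
have mfe : measurable_fun D (EFin \o f) by apply/measurable_EFinP.
have mP := measurable_funepos mfe.
have mN := measurable_funeneg mfe.
have P0 : 0 <= \int[lebesgue_measure]_(x in D) (EFin \o f)^\+ x.
  by apply: integral_ge0 => x _; exact: funepos_ge0.
have N0 : 0 <= \int[lebesgue_measure]_(x in D) (EFin \o f)^\- x.
  by apply: integral_ge0 => x _; exact: funeneg_ge0.
have [k0|k0] := leP 0%R k.
  rewrite (eq_integral (fun x : measurableTypeR R => k%:E * (EFin \o f)^\+ x)); last first.
    by move=> x _; rewrite !funeposE /= posM.
  rewrite [X in _ - X](eq_integral (fun x : measurableTypeR R => k%:E * (EFin \o f)^\- x)); last first.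
    by move=> x _; rewrite !funenegE /= negM.
  rewrite !ge0_integralZl_EFin //; try (move=> x _; first [exact: funepos_ge0|exact: funeneg_ge0]).
  exact: fineL1.
rewrite (eq_integral (fun x : measurableTypeR R => (- k)%:E * (EFin \o f)^\- x)); last first.
  by move=> x _; rewrite funeposE funenegE /= posMN.
rewrite [X in _ - X](eq_integral (fun x : measurableTypeR R => (- k)%:E * (EFin \o f)^\+ x)); last first.
  by move=> x _; rewrite funeposE funenegE /= negMN.
have k0' : (0 <= - k)%R by rewrite oppr_ge0 ltW.
rewrite !ge0_integralZl_EFin //; try (move=> x _; first [exact: funepos_ge0|exact: funeneg_ge0]).
rewrite fineL1 //.
by rewrite fineL2 // mulrNN.
Qed.
Local Close Scope ereal_scope.

Lemma entry_le_sum (n : nat) (A : 'M[R]_n) i j :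
  (`|A i j| <= \sum_i0 \sum_j0 `|A i0 j0|)%R.
Proof.
rewrite (bigD1 i) //= (bigD1 j) //= -addrA lerDl.
apply: addr_ge0; first by apply: sumr_ge0 => ? _; exact: normr_ge0.
by apply: sumr_ge0 => ? _; apply: sumr_ge0 => ? _; exact: normr_ge0.
Qed.

Lemma pow_entry_bound (n : nat) (A : 'M[R]_n) k i j :
  (`|(A ^+ k) i j| <= (n%:R * \sum_i0 \sum_j0 `|A i0 j0|) ^+ k)%R.
Proof.
set a := (\sum_i0 \sum_j0 `|A i0 j0|)%R.
have a0 : (0 <= a)%R.
  by apply: sumr_ge0 => ? _; apply: sumr_ge0 => ? _; exact: normr_ge0.
elim: k i j => [|k IH] i j.
  rewrite expr0 mxE; case: (i == j) => /=; rewrite ?normr1 ?normr0 //.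
rewrite exprSr mxE.
apply: (le_trans (ler_norm_sum _ _ _)).
apply: (@le_trans _ _ (\sum_(l < n) (n%:R * a) ^+ k * a)%R).
  apply: ler_sum => l _; rewrite normrM.
  apply: ler_pM; [exact: normr_ge0|exact: normr_ge0|exact: IH|exact: entry_le_sum].
rewrite sumr_const card_ord exprSr; rewrite le_eqVlt; apply/orP; left; apply/eqP; rewrite -mulr_natr; ring.
Qed.

Lemma expmx_cvg (n : nat) (B : 'M[R]_n) i j :
  cvgn (series (fun k : nat => ((B ^+ k) i j / k`!%:R : R))).
Proof.
set C := (n%:R * \sum_i0 \sum_j0 `|B i0 j0|)%R.
have C0 : (0 <= C)%R.
  apply: mulr_ge0 => //.
  by apply: sumr_ge0 => ? _; apply: sumr_ge0 => ? _; exact: normr_ge0.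
apply: normed_cvg.
apply: (@series_le_cvg R _ (exp_coeff C)).
- by move=> k /=; exact: normr_ge0.
- by move=> k /=; rewrite /exp_coeff /=; apply: divr_ge0 => //; exact: exprn_ge0.
- move=> k /=; rewrite /exp_coeff /= normrM normfV normr_nat.
  apply: ler_pM; [exact: normr_ge0| by rewrite invr_ge0 |exact: pow_entry_bound|exact: lexx].
- exact: is_cvg_series_exp_coeff.
Qed.

Lemma pow_meas (n : nat) (A : 'M[R]_n) k i j :
  measurable_fun setT (fun x : R => ((x *: A) ^+ k) i j).
Proof.
elim: k i j => [|k IH] i j.
  under eq_fun do rewrite expr0.
  exact: measurable_cst.
under eq_fun do rewrite exprSr mxE.
apply: measurable_sum => l.
apply: measurable_funM; first exact: IH.
under eq_fun do rewrite mxE.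
apply: measurable_funM => //.
Qed.

Lemma expmx_meas (n : nat) (A : 'M[R]_n) i j :
  measurable_fun setT (fun s : R => expmx (s *: A) i j).
Proof.
rewrite /expmx; under eq_fun do rewrite mxE.
apply: (@measurable_fun_cvg _ _ _ setT
  (fun m (s : R) => series (fun k : nat => (((s *: A) ^+ k) i j / k`!%:R : R)) m)).
- move=> m; rewrite /series /=.
  apply: measurable_sum => k.
  apply: measurable_funM => //.
  exact: pow_meas.
- move=> s _.
  exact: expmx_cvg.
Qed.

Lemma meas_aff (a b : R) : measurable_fun setT (fun x : R => a * (x - b)).
Proof.
apply: measurable_funM => //.
apply: measurable_funD => //.
Qed.

Lemma meas_sub (b : R) : measurable_fun setT (fun x : R => x - b).
Proof. by apply: measurable_funD. Qed.

Lemma meas_eaff (a b : R) : measurable_fun setT (fun x : R => expR (a * (x - b))).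
Proof. exact: (measurableT_comp (@measurable_expR R) (meas_aff a b)). Qed.

Lemma gradx_scale (n : nat) (e : R) (V : 'cV[R]_n) :
  gradx_phiT (e *: V) = e *: gradx_phiT V.
Proof.
apply/matrixP => l j; rewrite !mxE; case: eqP => _; last by rewrite mulr0.
by rewrite mulrCA.
Qed.

Lemma gradu_scale (n : nat) (e u : R) :
  gradu_phiT n (e * u) = e *: gradu_phiT n u.
Proof.
apply/matrixP => l j; rewrite !mxE; case: eqP => _; last by rewrite mulr0.
by rewrite mulrCA.
Qed.

Definition Kmat (n : nat) (M : 'M[R]_n) (V : 'cV[R]_n) (lam : R) : 'M[R]_(n, n.+1) :=
  \matrix_(i, j) int_from 0
     (fun s => expR (lam * s) * (expmx (s *: M^T) *m gradx_phiT V) i j).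
Arguments Kmat {n}.

Lemma Lmat_single (n : nat) (M : 'M[R]_n) (V : 'cV[R]_n) (lam t0 t : R) :
  Lmat M (fun tau => expR (lam * (tau - t0)) *: V) t =
  expR (lam * (t - t0)) *: Kmat M V lam.
Proof.
apply/matrixP => i j; rewrite !mxE.
pose Q := fun s : R => (expmx (s *: M^T) *m gradx_phiT V) i j.
have mQ : measurable_fun setT Q.
  rewrite /Q; under eq_fun do rewrite mxE.
  apply: measurable_sum => l.
  apply: measurable_funM => //.
  exact: expmx_meas.
have -> : (fun tau => (expmx (- ((t - tau) *: M^T)) *m
      gradx_phiT (expR (lam * (tau - t0)) *: V)) i j) =
   (fun tau => expR (lam * (tau - t0)) * Q (tau - t)).
  apply: funext => tau; rewrite gradx_scale -scalemxAr mxE.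
  by rewrite /Q -scaleNr opprB.
have mf : measurable_fun setT (fun tau : R => expR (lam * (tau - t0)) * Q (tau - t)).
  apply: measurable_funM; first exact: meas_eaff.
  exact: (measurableT_comp mQ (meas_sub t)).
have := shift_Rint t 0 _ mf; rewrite add0r => ->.
have -> : (fun s => expR (lam * (s + t - t0)) * Q (s + t - t)) =
  (fun s => expR (lam * (t - t0)) * (expR (lam * s) * Q s)).
  apply: funext => s; rewrite addrK mulrA -expRD; congr (expR _ * _).
  ring.
rewrite /int_from RintZ //.
apply: measurable_funM; apply: measurable_funTS; last exact: mQ.
rewrite (_ : (fun x => expR (lam * x)) = (fun x => expR (lam * (x - 0)))); last first.
  by apply: funext => x; rewrite subr0.
exact: meas_eaff.
Qed.

Definition wvec (n : nat) (M : 'M[R]_n) (N : 'cV[R]_n) (Th : 'rV[R]_n) (V : 'cV[R]_n)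
  (lam : R) : 'rV[R]_(n.+1) :=
  gradu_phiT n ((Th *m V) 0 0) + N^T *m Kmat M V lam.
Arguments wvec {n}.

Lemma W1_single (n : nat) (M : 'M[R]_n) (N : 'cV[R]_n) (Th : 'rV[R]_n)
  (V : 'cV[R]_n) (lam t0 t : R) :
  W1 M N (fun tau => expR (lam * (tau - t0)) *: V)
    (fun tau => (Th *m (expR (lam * (tau - t0)) *: V)) 0 0) t =
  expR (lam * (t - t0)) *: wvec M N Th V lam.
Proof.
rewrite /W1 Lmat_single /wvec -scalemxAr mxE gradu_scale.
by rewrite scalerDr scalemxAr.
Qed.

Lemma W_single (n : nat) (M : 'M[R]_n) (N : 'cV[R]_n) (Th : 'rV[R]_n)
  (V : 'cV[R]_n) (lam t0 : R) :
  Wmat M N (fun tau => expR (lam * (tau - t0)) *: V)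
    (fun tau => (Th *m (expR (lam * (tau - t0)) *: V)) 0 0) t0 =
  int_from t0 (fun t => expR (lam * (t - t0)) * expR (lam * (t - t0))) *:
    ((wvec M N Th V lam)^T *m wvec M N Th V lam).
Proof.
apply/matrixP => i j; rewrite !mxE.
set w := wvec M N Th V lam.
have -> : (fun t => ((W1 M N (fun tau => expR (lam * (tau - t0)) *: V)
    (fun tau => (Th *m (expR (lam * (tau - t0)) *: V)) 0 0) t)^T *m
    W1 M N (fun tau => expR (lam * (tau - t0)) *: V)
    (fun tau => (Th *m (expR (lam * (tau - t0)) *: V)) 0 0) t) i j) =
  (fun t => (w^T *m w) i j * (expR (lam * (t - t0)) * expR (lam * (t - t0)))).
  apply: funext => t; rewrite W1_single -/w.
  rewrite (_ : (expR (lam * (t - t0)) *: w)^T = expR (lam * (t - t0)) *: w^T); last first.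
    by apply/matrixP => a b; rewrite !mxE.
  by rewrite -scalemxAl -scalemxAr scalerA mxE mulrC.
rewrite /int_from RintZ //.
  by rewrite mulrC mxE.
by apply: measurable_funTS; apply: measurable_funM; exact: meas_eaff.
Qed.

Lemma cost_rank1 (a : R) (w : 'rV[R]_3) (c : 'cV[R]_3) :
  ioc_cost (a *: (w^T *m w)) c = a * ((w *m c) 0 0) ^+ 2.
Proof.
rewrite /ioc_cost -scalemxAr -scalemxAl mxE.
congr (_ * _).
rewrite mulmxA -trmx_mul -mulmxA [LHS]mxE big_ord1 [X in X * _]mxE.
by rewrite expr2.
Qed.

Lemma min_of (a E : R) (w : 'rV[R]_3) (c : 'cV[R]_3) : 0 <= a -> c ord_max 0 = E ->
  (forall c' : 'cV[R]_3, c' ord_max 0 = E -> (w *m c) 0 0 ^+ 2 <= (w *m c') 0 0 ^+ 2) ->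
  ioc_minimizer (a *: (w^T *m w)) E c.
Proof.
move=> a0 cE H; split => // c' h; rewrite !cost_rank1.
exact: (ler_wpM2l a0 (H c' h)).
Qed.

Definition i0 : 'I_3 := @Ordinal 3 0 isT.
Definition i1 : 'I_3 := @Ordinal 3 1 isT.
Definition i2 : 'I_3 := @Ordinal 3 2 isT.

Lemma wc_expand (w : 'rV[R]_3) (c : 'cV[R]_3) :
  (w *m c) 0 0 = w 0 i0 * c i0 0 + w 0 i1 * c i1 0 + w 0 i2 * c ord_max 0.
Proof.
rewrite mxE !big_ord_recl big_ord0 addr0 addrA.
by congr (w 0 _ * c _ 0 + w 0 _ * c _ 0 + w 0 _ * c _ 0); apply: val_inj.
Qed.

Definition col3 (p q e : R) : 'cV[R]_3 := \col_(j < 3) nth 0 [:: p; q; e] j.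

Lemma col3E p q e : [/\ col3 p q e i0 0 = p, col3 p q e i1 0 = q &
  col3 p q e ord_max 0 = e].
Proof. by rewrite !mxE. Qed.

Lemma family_min (a E : R) (w : 'rV[R]_3) : 0 <= a ->
  exists2 f : R -> 'cV[R]_3,
    (forall y, ioc_minimizer (a *: (w^T *m w)) E (f y)) & f 0 <> f 1.
Proof.
move=> a0.
have sq0 : forall c' : 'cV[R]_3, 0 <= (w *m c') 0 0 ^+ 2 by move=> c'; exact: sqr_ge0.
have [w0|w0] := eqVneq (w 0 i0) 0; last first.
  exists (fun y => col3 (- (w 0 i1 * y + w 0 i2 * E) / w 0 i0) y E).
    move=> y; apply: min_of => //; first by case: (col3E (- (w 0 i1 * y + w 0 i2 * E) / w 0 i0) y E).
    move=> c' _; rewrite wc_expand.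
    case: (col3E (- (w 0 i1 * y + w 0 i2 * E) / w 0 i0) y E) => -> -> ->.
    have -> : w 0 i0 * (- (w 0 i1 * y + w 0 i2 * E) / w 0 i0) + w 0 i1 * y + w 0 i2 * E = 0.
      by field.
    by rewrite expr2 mulr0.
  move=> /(congr1 (fun c : 'cV[R]_3 => c i1 0)).
  case: (col3E (- (w 0 i1 * 0 + w 0 i2 * E) / w 0 i0) 0 E) => _ -> _.
  case: (col3E (- (w 0 i1 * 1 + w 0 i2 * E) / w 0 i0) 1 E) => _ -> _.
  by move/eqP; rewrite eq_sym oner_eq0.
have [w1|w1] := eqVneq (w 0 i1) 0; last first.
  exists (fun y => col3 y (- (w 0 i2 * E) / w 0 i1) E).
    move=> y; apply: min_of => //; first by case: (col3E y (- (w 0 i2 * E) / w 0 i1) E).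
    move=> c' _; rewrite wc_expand.
    case: (col3E y (- (w 0 i2 * E) / w 0 i1) E) => -> -> ->.
    have -> : w 0 i0 * y + w 0 i1 * (- (w 0 i2 * E) / w 0 i1) + w 0 i2 * E = 0.
      by rewrite w0 mul0r add0r; field.
    by rewrite expr2 mulr0.
  move=> /(congr1 (fun c : 'cV[R]_3 => c i0 0)).
  case: (col3E 0 (- (w 0 i2 * E) / w 0 i1) E) => -> _ _.
  case: (col3E 1 (- (w 0 i2 * E) / w 0 i1) E) => -> _ _.
  by move/eqP; rewrite eq_sym oner_eq0.
exists (fun y => col3 y 0 E).
  move=> y; apply: min_of => //; first by case: (col3E y 0 E).
  move=> c' c'E; rewrite !wc_expand c'E.
  case: (col3E y 0 E) => _ _ ->.
  by rewrite w0 w1 !mul0r.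
move=> /(congr1 (fun c : 'cV[R]_3 => c i0 0)).
case: (col3E 0 0 E) => -> _ _.
case: (col3E 1 0 E) => -> _ _.
by move/eqP; rewrite eq_sym oner_eq0.
Qed.
End S.

Theorem lemma2 (R : realType) (M : 'M[R]_2) (N : 'cV[R]_2) (D : 'M[R]_2)
  (E : R) (Pi : 'M[R]_2) (lam1 : R) (V1 : 'cV[R]_2) (t0 : R) :
  is_diag_mx D -> (forall i, 0 <= D i i) -> 0 < E ->
  let Theta : 'rV[R]_2 := - (E^-1 *: (N^T *m Pi)) in
  (* Pi is the stabilizing solution of the algebraic Riccati equation *)
  Pi^T = Pi ->
  M^T *m Pi + Pi *m M + D - E^-1 *: (Pi *m N *m N^T *m Pi) = 0 ->
  hurwitz (M + N *m Theta) ->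
  (* the optimal closed loop is over-damped *)
  overdamped (M + N *m Theta) ->
  (* lam1 is a real eigenvalue of M + N Theta with right eigenvector V1 *)
  V1 != 0 -> (M + N *m Theta) *m V1 = lam1 *: V1 ->
  (* every eigenvalue of lam1 I + M has negative real part *)
  hurwitz (lam1%:M + M) ->
  (* closed loop initialised at the real mode: x(t0) = V1 *)
  let x : R -> 'cV[R]_2 := fun t => expR (lam1 * (t - t0)) *: V1 in
  let u : R -> R := fun t => (Theta *m x t) 0 0 in
  let W := Wmat M N x u t0 in
  (* the IOC problem does not converge to the true weights: it has a
     minimiser different from the true weights *)
  exists c : 'cV[R]_3, ioc_minimizer W E c /\ c <> true_weights D E.
Proof.
move=> _ _ _ Theta _ _ _ _ _ _ _ x u W.
have HW : W = int_from t0 (fun t => expR (lam1 * (t - t0)) * expR (lam1 * (t - t0))) *: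
    ((@wvec R 2 M N Theta V1 lam1)^T *m @wvec R 2 M N Theta V1 lam1).
  exact: W_single.
have a0 : 0 <= int_from t0 (fun t => expR (lam1 * (t - t0)) * expR (lam1 * (t - t0))).
  by apply: Rintegral_ge0 => t _; apply: mulr_ge0; exact: expR_ge0.
have [f Hf Hne] := @family_min R _ E (@wvec R 2 M N Theta V1 lam1) a0.
rewrite HW.
have [h|h] := pselect (f 0 = true_weights D E).
  exists (f 1); split => //.
  by move=> e; apply: Hne; rewrite h e.
by exists (f 0); split.
Qed.
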